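(* Consider a firm $i$ in period $t$ whose planned (expected) output is $$Y^e_{it}=F\big(K_{it},\exp\{\varphi_{it}\}L_{it},M_{it}\big)\exp\{\omega_{it}\},$$ and whose realized output is $Y_{it}=Y^e_{it}\exp\{\eta_{it}\}$, where $K_{it}$ is physical capital, $L_{it}$ labor, $M_{it}$ materials, $\omega_{it}$ Hicks-neutral (factor-neutral) productivity, $\varphi_{it}$ Harrod-neutral (labor-augmenting) productivity, and $\eta_{it}$ a transitory shock. Assume: (A1) $K_{it}$ is a dynamic input chosen at time $t-1$ (so it is predetermined at $t$, with $K_{it}=I_{it-1}+(1-\delta)K_{it-1}$), while $L_{it}$ and $M_{it}$ are freely varying inputs chosen statically at time $t$ with no dynamic implications; (A2) $F$ is continuous, differentiable, positively monotone and concave in its inputs, and strongly separable as $F(K,\exp\{\varphi\}L,M)=G\big(K,H(\exp\{\varphi\}L,M)\big)$ with $H$ homogeneous of some degree, and $F$ has a known parametric form; (A3) $\omega_{it}$ and $\varphi_{it}$ follow controlled first-order Markov processes, $\mathcal{P}_\omega(\omega_{it}\mid\Xi_{it-1})=\mathcal{P}_\omega(\omega_{it}\mid\omega_{it-1},X_{it-1})$ and $\mathcal{P}_\varphi(\varphi_{it}\mid\Xi_{it-1})=\mathcal{P}_\varphi(\varphi_{it}\mid\varphi_{it-1},Z_{it-1})$, where $\Xi_{it}$ is the firm's time-$t$ information set and $X_{it},Z_{it}$ are productivity-modifying activities, and $\eta_{it}$ is i.i.d. with $\mathcal{P}_\eta(\eta_{it}\mid\Xi_{it})=\mathcal{P}_\eta(\eta_{it})$;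 (A5) risk-neutral firms face perfectly competitive factor markets with firm-common prices $P^L_t,P^M_t$, and a monopolistically competitive output market with downward-sloping inverse residual demand $P^Y_{it}=D(Y^e_{it},U_{it})$, where $U_{it}\in\Xi_{it}$ is a vector of demand shifters known to the firm. The firm chooses $(L_{it},M_{it})$ to maximize expected static profit $\theta\, D(Y^e_{it},U_{it})\,Y^e_{it}-P^L_tL_{it}-P^M_tM_{it}$ with $\theta=\mathbb{E}[\exp\{\eta_{it}\}\mid\Xi_{it}]$, so that the first-order conditions are $P^Y_{it}\,\theta\,\mu_{it}^{-1}\,\partial Y^e_{it}/\partial M_{it}=P^M_t$ and $P^Y_{it}\,\theta\,\mu_{it}^{-1}\,\partial Y^e_{it}/\partial L_{it}=P^L_t$, where $\mu_{it}=\mu(P^Y_{it},U_{it})=\big(1+1/\delta(P^Y_{it},U_{it})\big)^{-1}$ is the markup and $\delta(P^Y_{it},U_{it})<-1$ is the price elasticity of demand. Suppose in addition that (i) $\partial^2\ln F/(\partial\ln L\,\partial\ln M)\ge 0$, and (ii) $0\le \partial\ln\mu/\partial\ln P^Y\le 1$. Then the firm's conditional material demand $M_{it}=\mathcal{M}(K_{it},P^L_t,P^M_t,U_{it},\varphi_{it},\omega_{it})$ is weakly increasing in $\omega_{it}$ and in $\varphi_{it}$, conditional on $(K_{it},P^L_t,P^M_t,U_{it})$.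
   Context: Firms are indexed by $i$ and time by $t$. $\omega_{it}$ enters output log-additively (Hicks-neutral productivity) and $\varphi_{it}$ multiplies labor inside $F$ (labor-augmenting, Harrod-neutral productivity). The ''conditional material demand'' is the optimal $M_{it}$ solving the static profit maximization above given the state $(K_{it},P^L_t,P^M_t,U_{it},\varphi_{it},\omega_{it})$. *)

(* Defs.v *)
From Stdlib Require Import Reals.
From Coquelicot Require Import Coquelicot.
Open Scope R_scope.

(* Positive orthant of input space (K, E, M), E = effective labor exp(phi) L *)
Definition pos3 (K E M : R) : Prop := 0 < K /\ 0 < E /\ 0 < M.

Definition Ye (F : R -> R -> R -> R) (K phi omega L M : R) : R :=
  F K (exp phi * L) M * exp omega.

Definition profit {UT : Type} (F : R -> R -> R -> R) (D : R -> UT -> R)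
  (theta K pL pM : R) (u : UT) (phi omega L M : R) : R :=
  theta * D (Ye F K phi omega L M) u * Ye F K phi omega L M - pL * L - pM * M.

Definition F_continuous (F : R -> R -> R -> R) : Prop :=
  forall K E M, pos3 K E M ->
    filterlim (fun x : R * R * R => F (fst (fst x)) (snd (fst x)) (snd x))
              (locally (K, E, M)) (locally (F K E M)).

Definition F_differentiable (F : R -> R -> R -> R) : Prop :=
  forall K E M, pos3 K E M ->
    ex_filterdiff (fun x : R * R * R => F (fst (fst x)) (snd (fst x)) (snd x)) (locally (K, E, M)).

Definition F_pos_monotone (F : R -> R -> R -> R) : Prop :=
  (forall K E M, pos3 K E M -> 0 < F K E M) /\
  (forall K K' E M, pos3 K E M -> K < K' -> F K E M < F K' E M) /\
  (forall K E E' M, pos3 K E M -> E < E' -> F K E M < F K E' M) /\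
  (forall K E M M', pos3 K E M -> M < M' -> F K E M < F K E M').

Definition F_concave (F : R -> R -> R -> R) : Prop :=
  forall K E M K' E' M' t, pos3 K E M -> pos3 K' E' M' -> 0 <= t <= 1 ->
    t * F K E M + (1 - t) * F K' E' M'
    <= F (t * K + (1 - t) * K') (t * E + (1 - t) * E') (t * M + (1 - t) * M').

Definition homogeneous (H : R -> R -> R) (r : R) : Prop :=
  forall s E M, 0 < s -> 0 < E -> 0 < M -> H (s * E) (s * M) = Rpower s r * H E M.

Definition F_strongly_separable (F : R -> R -> R -> R) : Prop :=
  exists (G : R -> R -> R) (H : R -> R -> R) (r : R),
    homogeneous H r /\ forall K E M, pos3 K E M -> F K E M = G K (H E M).

Definition lnF_loglog (F : R -> R -> R -> R) (K a b : R) : R :=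
  ln (F K (exp a) (exp b)).

(* condition (i):  d^2 ln F / (d ln L d ln M) >= 0 *)
Definition cross_elasticity_nonneg (F : R -> R -> R -> R) : Prop :=
  forall K a b, 0 < K ->
    ex_derive (fun a' => Derive (fun b' => lnF_loglog F K a' b') b) a /\
    0 <= Derive (fun a' => Derive (fun b' => lnF_loglog F K a' b') b) a.

Definition D_downward_sloping {UT : Type} (D : R -> UT -> R) : Prop :=
  forall u, (forall Y, 0 < Y -> 0 < D Y u /\ ex_derive (fun y => D y u) Y) /\
            (forall Y Y', 0 < Y -> Y < Y' -> D Y' u < D Y u).

(* price elasticity of demand at the price P = D(Y,U):
   delta = (dY/dP)(P/Y) = D(Y,U) / (Y * dD/dY) *)
Definition price_elasticity {UT : Type} (D : R -> UT -> R) (u : UT) (Y : R) : R :=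
  D Y u / (Y * Derive (fun y => D y u) Y).

Definition markup_of_demand {UT : Type} (D : R -> UT -> R) (mu : R -> UT -> R) : Prop :=
  forall u Y, 0 < Y ->
    price_elasticity D u Y < -1 /\
    mu (D Y u) u = / (1 + / price_elasticity D u Y).

Definition markup_elasticity_in_01 {UT : Type} (D : R -> UT -> R) (mu : R -> UT -> R) : Prop :=
  forall u Y, 0 < Y ->
    ex_derive (fun x => ln (mu (exp x) u)) (ln (D Y u)) /\
    0 <= Derive (fun x => ln (mu (exp x) u)) (ln (D Y u)) <= 1.

Definition is_conditional_demand {UT : Type} (F : R -> R -> R -> R) (D : R -> UT -> R)
  (theta : R) (Ldem Mdem : R -> R -> R -> UT -> R -> R -> R) : Prop :=
  forall K pL pM u phi omega, 0 < K -> 0 < pL -> 0 < pM ->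
    0 < Ldem K pL pM u phi omega /\ 0 < Mdem K pL pM u phi omega /\
    forall L M, 0 < L -> 0 < M ->
      (L, M) <> (Ldem K pL pM u phi omega, Mdem K pL pM u phi omega) ->
      profit F D theta K pL pM u phi omega L M
      < profit F D theta K pL pM u phi omega
          (Ldem K pL pM u phi omega) (Mdem K pL pM u phi omega).

(* Main.v *)
Require Import Defs.
From Stdlib Require Import Reals Lra Classical.
From Coquelicot Require Import Coquelicot.
Open Scope R_scope.

Lemma nondecr (f df : R -> R) :
  (forall x, is_derive f x (df x)) -> (forall x, 0 <= df x) ->
  forall x y, x <= y -> f x <= f y.
Proof.
  intros Hd Hp x y Hxy.
  destruct (MVT_gen f x y df) as [c [_ Hc]].
  - intros z _. apply Hd.
  - intros z _. apply continuity_pt_filterlim.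
    exact (ex_derive_continuous f z (ex_intro _ _ (Hd z))).
  - assert (0 <= df c * (y - x)) by (apply Rmult_le_pos; [apply Hp|lra]). lra.
Qed.

Lemma F_partial_M (F : R -> R -> R -> R) K E M :
  F_differentiable F -> pos3 K E M -> ex_derive (fun m => F K E m) M.
Proof.
  intros HF Hp. apply ex_derive_filterdiff.
  destruct (HF K E M Hp) as [l Hl].
  eexists.
  apply (filterdiff_comp'_2 (fun _ : R => (K, E)) (fun m : R => m)
           (fun (p : R * R) (m : R) => F (fst p) (snd p) m) M
           (fun _ => zero) (fun y => y) (fun p m => l (p, m))).
  - apply filterdiff_const.
  - apply filterdiff_id.
  - simpl. eapply filterdiff_ext_lin. exact Hl. intros [p m]. reflexivity.
Qed.

Lemma g_derivable (F : R -> R -> R -> R) K a b :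
  F_differentiable F -> F_pos_monotone F -> 0 < K ->
  ex_derive (fun b' => lnF_loglog F K a b') b.
Proof.
  intros HF [Hpos _] HK. unfold lnF_loglog.
  assert (Hp : pos3 K (exp a) (exp b)) by (repeat split; auto; apply exp_pos).
  apply (ex_derive_comp ln (fun b' => F K (exp a) (exp b'))).
  - eexists. apply is_derive_ln. apply Hpos. exact Hp.
  - apply (ex_derive_comp (fun m => F K (exp a) m) exp).
    + apply F_partial_M; auto.
    + eexists. apply is_derive_exp.
Qed.

Lemma g_supermod (F : R -> R -> R -> R) K a1 a2 b1 b2 :
  F_differentiable F -> F_pos_monotone F -> cross_elasticity_nonneg F -> 0 < K ->
  a1 <= a2 -> b1 <= b2 ->
  lnF_loglog F K a2 b2 - lnF_loglog F K a1 b2 >=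
  lnF_loglog F K a2 b1 - lnF_loglog F K a1 b1.
Proof.
  intros HF Hm Hi HK Ha Hb.
  set (g := lnF_loglog F K).
  assert (Hmono : forall b, Derive (fun b' => g a1 b') b <= Derive (fun b' => g a2 b') b).
  { intro b.
    apply (nondecr (fun a' => Derive (fun b' => g a' b') b)
             (fun a => Derive (fun a' => Derive (fun b' => g a' b') b) a)); auto.
    - intro x. apply Derive_correct. apply (Hi K x b HK).
    - intro x. apply (Hi K x b HK). }
  assert (H := nondecr (fun b => g a2 b - g a1 b)
             (fun b => Derive (fun b' => g a2 b') b - Derive (fun b' => g a1 b') b)).
  assert (Hle : g a2 b1 - g a1 b1 <= g a2 b2 - g a1 b2).
  { apply H; auto.
    - intro x. apply (is_derive_minus (fun b => g a2 b) (fun b => g a1 b));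
        apply Derive_correct; apply g_derivable; auto.
    - intro x. specialize (Hmono x). lra. }
  lra.
Qed.

Definition Gf (F : R -> R -> R -> R) K E M := ln (F K E M).

Lemma Gf_loglog F K E M : 0 < E -> 0 < M ->
  Gf F K E M = lnF_loglog F K (ln E) (ln M).
Proof. intros. unfold Gf, lnF_loglog. rewrite !exp_ln; auto. Qed.

Lemma Gf_supermod (F : R -> R -> R -> R) K E1 E2 M1 M2 :
  F_differentiable F -> F_pos_monotone F -> cross_elasticity_nonneg F -> 0 < K ->
  0 < E1 -> E1 <= E2 -> 0 < M1 -> M1 <= M2 ->
  Gf F K E2 M2 - Gf F K E1 M2 >= Gf F K E2 M1 - Gf F K E1 M1.
Proof.
  intros. rewrite !Gf_loglog by lra.
  apply g_supermod; auto; apply ln_le; lra.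
Qed.

Lemma Gf_monoE (F : R -> R -> R -> R) K E1 E2 M :
  F_pos_monotone F -> 0 < K -> 0 < E1 -> E1 <= E2 -> 0 < M ->
  Gf F K E1 M <= Gf F K E2 M.
Proof.
  intros [Hp [_ [HE _]]] HK H1 H12 HM. unfold Gf.
  destruct (Rle_lt_or_eq_dec _ _ H12) as [h|h].
  - apply Rlt_le, ln_increasing. apply Hp; repeat split; auto.
    apply HE; [repeat split; auto | auto].
  - subst; lra.
Qed.

Lemma Gf_monoM (F : R -> R -> R -> R) K E M1 M2 :
  F_pos_monotone F -> 0 < K -> 0 < E -> 0 < M1 -> M1 <= M2 ->
  Gf F K E M1 <= Gf F K E M2.
Proof.
  intros [Hp [_ [_ HM]]] HK H1 H12 HM12. unfold Gf.
  destruct (Rle_lt_or_eq_dec _ _ HM12) as [h|h].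
  - apply Rlt_le, ln_increasing. apply Hp; repeat split; auto.
    apply HM; [repeat split; auto | auto].
  - subst; lra.
Qed.

Lemma isd_eq (f : R -> R) x l l' : is_derive f x l -> l = l' -> is_derive f x l'.
Proof. intros H ->. exact H. Qed.

Definition Rv {UT : Type} (theta : R) (D : R -> UT -> R) (u : UT) y :=
  theta * D (exp y) u * exp y.
Definition Rvd {UT : Type} (theta : R) (D : R -> UT -> R) (mu : R -> UT -> R) (u : UT) y :=
  theta * D (exp y) u * exp y / mu (D (exp y) u) u.
Definition psi {UT : Type} (mu : R -> UT -> R) (u : UT) x := ln (mu (exp x) u).
Definition pp {UT : Type} (D : R -> UT -> R) (u : UT) y := ln (D (exp y) u).

Lemma isd_Dexp {UT : Type} (D : R -> UT -> R) u y :
  D_downward_sloping D ->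
  is_derive (fun y => D (exp y) u) y (exp y * Derive (fun Y => D Y u) (exp y)).
Proof.
  intros HD. eapply isd_eq.
  apply (is_derive_comp (fun Y => D Y u) exp).
  - apply Derive_correct. apply (proj1 (HD u)). apply exp_pos.
  - apply is_derive_exp.
  - reflexivity.
Qed.

Lemma elast_facts {UT : Type} (D : R -> UT -> R) mu u Y :
  D_downward_sloping D -> markup_of_demand D mu -> 0 < Y ->
  let d := Derive (fun y => D y u) Y in
  0 < D Y u /\ d <> 0 /\ -1 < Y * d / D Y u < 0 /\
  mu (D Y u) u = / (1 + Y * d / D Y u).
Proof.
  intros HD Hmu HY d.
  destruct (proj1 (HD u) Y HY) as [HDp _].
  destruct (Hmu u Y HY) as [Hel Hm]. unfold price_elasticity in *. fold d in Hel, Hm.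
  assert (Hd : d <> 0).
  { intro h. rewrite h, Rmult_0_r, Rdiv_0_r in Hel. lra. }
  assert (Hinv : / (D Y u / (Y * d)) = Y * d / D Y u).
  { field. split; auto; lra. }
  rewrite Hinv in Hm.
  assert (Hneg : D Y u / (Y * d) < 0) by lra.
  assert (Y * d < 0).
  { destruct (Rlt_or_le (Y*d) 0) as [h|h]; auto.
    exfalso. assert (0 <= D Y u / (Y * d)).
    { destruct (Rle_lt_or_eq_dec _ _ h) as [h'|h'].
      - apply Rlt_le. apply Rdiv_lt_0_compat; lra.
      - rewrite <- h', Rdiv_0_r. lra. }
    lra. }
  repeat split; auto.
  - rewrite <- Hinv. 
    assert (0 < / (- (D Y u / (Y * d))) < 1).
    { split. apply Rinv_0_lt_compat. lra. rewrite <- Rinv_1. apply Rinv_lt_contravar; lra. }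
    rewrite Rinv_opp in H0. lra.
  - apply Rdiv_neg_pos; lra.
Qed.

Lemma Rv_deriv {UT : Type} theta (D : R -> UT -> R) mu u y :
  D_downward_sloping D -> markup_of_demand D mu ->
  is_derive (Rv theta D u) y (Rvd theta D mu u y).
Proof.
  intros HD Hmu. unfold Rv, Rvd.
  destruct (elast_facts D mu u (exp y) HD Hmu (exp_pos y)) as [HDp [Hd [Hr Hm]]].
  set (d := Derive (fun Y => D Y u) (exp y)) in *.
  eapply isd_eq.
  - apply (is_derive_mult (fun y => theta * D (exp y) u) exp).
    + apply (is_derive_mult (fun _ => theta) (fun y => D (exp y) u)).
      * apply is_derive_const.
      * apply isd_Dexp; auto.
      * intros; apply Rmult_comm.
    + apply is_derive_exp.
    + intros; apply Rmult_comm.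
  - rewrite Hm. fold d. unfold plus, mult, zero; simpl. field.
    split; [lra|].
    assert (exp y * d = (exp y * d / D (exp y) u) * D (exp y) u) by (field; lra).
    nra.
Qed.

Lemma Rvd_pos {UT : Type} theta (D : R -> UT -> R) mu u y :
  D_downward_sloping D -> markup_of_demand D mu -> 0 < theta ->
  0 < Rvd theta D mu u y.
Proof.
  intros HD Hmu Ht. unfold Rvd.
  destruct (elast_facts D mu u (exp y) HD Hmu (exp_pos y)) as [HDp [Hd [Hr Hm]]].
  rewrite Hm. unfold Rdiv. rewrite Rinv_inv.
  assert (0 < exp y) by apply exp_pos.
  apply Rmult_lt_0_compat; [|lra].
  apply Rmult_lt_0_compat; [|lra]. apply Rmult_lt_0_compat; lra.
Qed.

Lemma Rvd_mono {UT : Type} theta (D : R -> UT -> R) mu u x y :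
  D_downward_sloping D -> markup_of_demand D mu -> markup_elasticity_in_01 D mu ->
  0 < theta -> x <= y -> Rvd theta D mu u x <= Rvd theta D mu u y.
Proof.
  intros HD Hmu Hii Ht Hxy.
  set (h := fun y => pp D u y + y - psi mu u (pp D u y)).
  assert (Heq : forall y, Rvd theta D mu u y = theta * exp (h y)).
  { intro z. unfold h, Rvd, pp, psi.
    destruct (elast_facts D mu u (exp z) HD Hmu (exp_pos z)) as [HDp [Hd [Hr Hm]]].
    rewrite exp_ln by lra.
    assert (0 < mu (D (exp z) u) u).
    { rewrite Hm. apply Rinv_0_lt_compat. lra. }
    unfold Rminus. rewrite !exp_plus, exp_Ropp, !exp_ln by lra. field. lra. }
  rewrite !Heq. apply Rmult_le_compat_l; [lra|].
  assert (Hh : h x <= h y).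
  { apply (nondecr h (fun z => exp z * Derive (fun Y => D Y u) (exp z) / D (exp z) u * (1 - Derive (psi mu u) (pp D u z)) + 1)); auto.
    - intro z.
      destruct (elast_facts D mu u (exp z) HD Hmu (exp_pos z)) as [HDp [Hd [Hr Hm]]].
      destruct (Hii u (exp z) (exp_pos z)) as [Hex _].
      assert (Hpp : is_derive (pp D u) z (exp z * Derive (fun Y => D Y u) (exp z) / D (exp z) u)).
      { eapply isd_eq.
        apply (is_derive_comp ln (fun y => D (exp y) u)).
        - apply is_derive_ln. lra.
        - apply isd_Dexp; auto.
        - unfold scal; simpl; unfold mult; simpl. field. lra. }
      eapply isd_eq.
      + apply (is_derive_minus (fun y => pp D u y + y) (fun y => psi mu u (pp D u y))).
        * apply (is_derive_plus (pp D u) (fun y => y)). exact Hpp. apply is_derive_id.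
        * apply (is_derive_comp (psi mu u) (pp D u)).
          -- apply Derive_correct. exact Hex.
          -- exact Hpp.
      + unfold minus, plus, opp, scal, one; simpl. unfold mult, plus, opp; simpl. ring.
    - intro z.
      destruct (elast_facts D mu u (exp z) HD Hmu (exp_pos z)) as [HDp [Hd [Hr Hm]]].
      destruct (Hii u (exp z) (exp_pos z)) as [_ Hs].
      unfold psi, pp. nra. }
  destruct (Rle_lt_or_eq_dec _ _ Hh) as [h'|h'].
  - apply Rlt_le, exp_increasing; auto.
  - rewrite h'; lra.
Qed.

Lemma Rv_L {UT : Type} theta (D : R -> UT -> R) mu u x y d d' :
  D_downward_sloping D -> markup_of_demand D mu -> markup_elasticity_in_01 D mu ->
  0 < theta -> x <= y -> 0 <= d' <= d ->
  Rv theta D u (y + d) - Rv theta D u y >= Rv theta D u (x + d') - Rv theta D u x.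
Proof.
  intros HD Hmu Hii Ht Hxy Hd.
  assert (Hinc : forall a b, a <= b -> Rv theta D u a <= Rv theta D u b).
  { apply (nondecr _ (Rvd theta D mu u)).
    - intro; apply Rv_deriv; auto.
    - intro; apply Rlt_le, Rvd_pos; auto. }
  assert (H1 : Rv theta D u (y + d') <= Rv theta D u (y + d)) by (apply Hinc; lra).
  assert (H2 : Rv theta D u (x + d') - Rv theta D u x <= Rv theta D u (y + d') - Rv theta D u y).
  { apply (nondecr (fun s => Rv theta D u (s + d') - Rv theta D u s)
             (fun s => Rvd theta D mu u (s + d') - Rvd theta D mu u s)); auto.
    - intro s. apply (is_derive_minus (fun s => Rv theta D u (s + d')) (Rv theta D u)).
      + eapply isd_eq.
        apply (is_derive_comp (Rv theta D u) (fun s => s + d')).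
        * apply (Rv_deriv theta D mu); auto.
        * assert (Hs : is_derive (fun s : R => s + d') s 1).
          { eapply isd_eq. apply (is_derive_plus (fun s : R => s) (fun _ => d')).
            apply is_derive_id. apply is_derive_const.
            unfold plus, one, zero; simpl. ring. }
          exact Hs.
        * unfold scal, plus, one, zero; simpl. unfold mult, plus; simpl. ring.
      + apply Rv_deriv; auto.
    - intro s. assert (Rvd theta D mu u s <= Rvd theta D mu u (s + d')) by (apply Rvd_mono; auto; lra).
      lra. }
  lra.
Qed.

Lemma Rv_SM {UT : Type} theta (D : R -> UT -> R) mu u A B C Dd :
  D_downward_sloping D -> markup_of_demand D mu -> markup_elasticity_in_01 D mu ->
  0 < theta -> A <= B -> A <= C -> B <= Dd -> C <= Dd -> Dd - C >= B - A ->
  Rv theta D u Dd + Rv theta D u A >= Rv theta D u B + Rv theta D u C.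
Proof.
  intros HD Hmu Hii Ht HAB HAC HBD HCD Hs.
  destruct (Rle_or_lt B C) as [h|h].
  - assert (H := Rv_L theta D mu u A C (Dd - C) (B - A) HD Hmu Hii Ht HAC ltac:(lra)).
    replace (C + (Dd - C)) with Dd in H by ring.
    replace (A + (B - A)) with B in H by ring. lra.
  - assert (H := Rv_L theta D mu u A B (Dd - B) (C - A) HD Hmu Hii Ht HAB ltac:(lra)).
    replace (B + (Dd - B)) with Dd in H by ring.
    replace (A + (C - A)) with C in H by ring. lra.
Qed.

Lemma Rle_total (x y : R) : x <= y \/ y <= x.
Proof. destruct (Rle_or_lt x y); [left|right]; lra. Qed.

Lemma topkis (P : R -> R -> R -> R) (xu xv : R -> R) t1 t2 :
  0 < xu t1 -> 0 < xv t1 -> 0 < xu t2 -> 0 < xv t2 ->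
  (forall a b, 0 < a -> 0 < b -> (a, b) <> (xu t1, xv t1) -> P t1 a b < P t1 (xu t1) (xv t1)) ->
  (forall a b, 0 < a -> 0 < b -> (a, b) <> (xu t2, xv t2) -> P t2 a b < P t2 (xu t2) (xv t2)) ->
  (forall a1 a2 b1 b2, 0 < a1 -> a1 <= a2 -> 0 < b1 -> b1 <= b2 ->
     P t2 a2 b2 + P t2 a1 b1 >= P t2 a2 b1 + P t2 a1 b2) ->
  (forall a' a b' b, 0 < a' -> a' <= a -> 0 < b' -> b' <= b ->
     P t2 a b - P t2 a' b' >= P t1 a b - P t1 a' b') ->
  xv t1 <= xv t2.
Proof.
  intros hu1 hv1 hu2 hv2 Opt1 Opt2 SM ID.
  set (u1 := xu t1) in *. set (v1 := xv t1) in *.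
  set (u2 := xu t2) in *. set (v2 := xv t2) in *.
  assert (Lat : P t2 (Rmax u1 u2) (Rmax v1 v2) + P t2 (Rmin u1 u2) (Rmin v1 v2)
                >= P t2 u1 v1 + P t2 u2 v2).
  { destruct (Rle_total u1 u2) as [hu|hu]; destruct (Rle_total v1 v2) as [hv|hv].
    - rewrite (Rmax_right u1), (Rmax_right v1), (Rmin_left u1), (Rmin_left v1) by auto. lra.
    - rewrite (Rmax_right u1), (Rmax_left v1), (Rmin_left u1), (Rmin_right v1) by auto.
      pose proof (SM u1 u2 v2 v1 hu1 hu hv2 hv). lra.
    - rewrite (Rmax_left u1), (Rmax_right v1), (Rmin_right u1), (Rmin_left v1) by auto.
      pose proof (SM u2 u1 v1 v2 hu2 hu hv1 hv). lra.
    - rewrite (Rmax_left u1), (Rmax_left v1), (Rmin_right u1), (Rmin_right v1) by auto. lra. }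
  assert (Hmin_u : 0 < Rmin u1 u2) by (apply Rmin_glb_lt; auto).
  assert (Hmin_v : 0 < Rmin v1 v2) by (apply Rmin_glb_lt; auto).
  assert (H1 : P t2 u1 v1 - P t2 (Rmin u1 u2) (Rmin v1 v2)
               >= P t1 u1 v1 - P t1 (Rmin u1 u2) (Rmin v1 v2)).
  { apply ID; auto; [apply Rmin_l | apply Rmin_l]. }
  assert (H2 : P t1 (Rmin u1 u2) (Rmin v1 v2) <= P t1 u1 v1).
  { destruct (classic ((Rmin u1 u2, Rmin v1 v2) = (u1, v1))) as [e|n].
    - injection e as e1 e2. rewrite e1, e2. lra.
    - apply Rlt_le, Opt1; auto. }
  assert (H3 : P t2 (Rmax u1 u2) (Rmax v1 v2) >= P t2 u2 v2) by lra.
  destruct (classic ((Rmax u1 u2, Rmax v1 v2) = (u2, v2))) as [e|n].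
  - injection e as e1 e2. rewrite <- e2. apply Rmax_l.
  - exfalso.
    assert (0 < Rmax u1 u2) by (eapply Rlt_le_trans; [exact hu1 | apply Rmax_l]).
    assert (0 < Rmax v1 v2) by (eapply Rlt_le_trans; [exact hv1 | apply Rmax_l]).
    specialize (Opt2 _ _ H H0 n). lra.
Qed.

Definition Q {UT : Type} F (D : R -> UT -> R) theta K pL pM (u : UT) phi omega E M :=
  Rv theta D u (Gf F K E M + omega) - pL * / exp phi * E - pM * M.

Lemma exp_le (x y : R) : x <= y -> exp x <= exp y.
Proof.
  intros h. destruct (Rle_lt_or_eq_dec _ _ h) as [h'|h'].
  - apply Rlt_le, exp_increasing; auto.
  - rewrite h'; lra.
Qed.

Theorem proposition1 (UT : Type) (F : R -> R -> R -> R) (D : R -> UT -> R)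
  (mu : R -> UT -> R) (theta : R) (Ldem Mdem : R -> R -> R -> UT -> R -> R -> R) :
  (* (A2) *)
  F_continuous F -> F_differentiable F -> F_pos_monotone F -> F_concave F ->
  F_strongly_separable F ->
  (* (A5) *)
  D_downward_sloping D -> markup_of_demand D mu ->
  (* theta = E[exp eta | Xi] > 0, a constant by (A3) *)
  0 < theta ->
  (* material (and labor) demand solve the static profit maximization *)
  is_conditional_demand F D theta Ldem Mdem ->
  (* (i) and (ii) *)
  cross_elasticity_nonneg F -> markup_elasticity_in_01 D mu ->
  forall K pL pM (u : UT), 0 < K -> 0 < pL -> 0 < pM ->
    (forall phi omega1 omega2, omega1 <= omega2 ->
       Mdem K pL pM u phi omega1 <= Mdem K pL pM u phi omega2) /\
    (forall omega phi1 phi2, phi1 <= phi2 ->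
       Mdem K pL pM u phi1 omega <= Mdem K pL pM u phi2 omega).
Proof.
  intros _ HF Hm _ _ HD Hmu Ht Hdem Hi Hii K pL pM u HK HpL HpM.
  set (QQ := Q F D theta K pL pM u).
  assert (Hprof : forall phi omega L M, 0 < L -> 0 < M ->
            profit F D theta K pL pM u phi omega L M = QQ phi omega (exp phi * L) M).
  { intros phi omega L M hL hM. unfold QQ, Q, profit, Ye, Rv, Gf.
    assert (0 < exp phi) by apply exp_pos.
    assert (0 < F K (exp phi * L) M).
    { apply (proj1 Hm). repeat split; auto. apply Rmult_lt_0_compat; auto. }
    rewrite exp_plus, exp_ln by auto. field. lra. }
  assert (Huniq : forall phi omega,
     0 < exp phi * Ldem K pL pM u phi omega /\ 0 < Mdem K pL pM u phi omega /\
     forall E M, 0 < E -> 0 < M -> (E, M) <> (exp phi * Ldem K pL pM u phi omega, Mdem K pL pM u phi omega) ->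
       QQ phi omega E M < QQ phi omega (exp phi * Ldem K pL pM u phi omega) (Mdem K pL pM u phi omega)).
  { intros phi omega.
    destruct (Hdem K pL pM u phi omega HK HpL HpM) as [hL [hM Hopt]].
    assert (0 < exp phi) by apply exp_pos.
    split; [apply Rmult_lt_0_compat; auto|]. split; auto.
    intros E M hE hM' hne.
    assert (hL' : 0 < E / exp phi) by (apply Rdiv_lt_0_compat; auto).
    assert (hEq : E = exp phi * (E / exp phi)) by (field; lra).
    rewrite hEq, <- !Hprof; auto.
    apply Hopt; auto.
    intro e. injection e as e1 e2. apply hne. rewrite hEq, e1, e2. reflexivity. }
  assert (HSM : forall phi omega E1 E2 M1 M2, 0 < E1 -> E1 <= E2 -> 0 < M1 -> M1 <= M2 ->
     QQ phi omega E2 M2 + QQ phi omega E1 M1 >= QQ phi omega E2 M1 + QQ phi omega E1 M2).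
  { intros phi omega E1 E2 M1 M2 h1 h12 h2 h22. unfold QQ, Q.
    pose proof (Gf_supermod F K E1 E2 M1 M2 HF Hm Hi HK h1 h12 h2 h22).
    pose proof (Gf_monoE F K E1 E2 M1 Hm HK h1 h12 h2).
    pose proof (Gf_monoE F K E1 E2 M2 Hm HK h1 h12 ltac:(lra)).
    pose proof (Gf_monoM F K E1 M1 M2 Hm HK h1 h2 h22).
    pose proof (Gf_monoM F K E2 M1 M2 Hm HK ltac:(lra) h2 h22).
    pose proof (Rv_SM theta D mu u (Gf F K E1 M1 + omega) (Gf F K E2 M1 + omega)
                  (Gf F K E1 M2 + omega) (Gf F K E2 M2 + omega) HD Hmu Hii Ht
                  ltac:(lra) ltac:(lra) ltac:(lra) ltac:(lra) ltac:(lra)).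
    lra. }
  split.
  - intros phi w1 w2 hw.
    destruct (Huniq phi w1) as [a1 [b1 O1]]. destruct (Huniq phi w2) as [a2 [b2 O2]].
    apply (topkis (fun t E M => QQ phi t E M) (fun t => exp phi * Ldem K pL pM u phi t)
             (fun t => Mdem K pL pM u phi t) w1 w2); auto.
    intros E' E M' M h1 h12 h2 h22. unfold QQ, Q.
    assert (Gf F K E' M' <= Gf F K E M).
    { pose proof (Gf_monoE F K E' E M' Hm HK h1 h12 h2).
      pose proof (Gf_monoM F K E M' M Hm HK ltac:(lra) h2 h22). lra. }
    pose proof (Rv_L theta D mu u (Gf F K E' M' + w1) (Gf F K E' M' + w2)
                  (Gf F K E M - Gf F K E' M') (Gf F K E M - Gf F K E' M') HD Hmu Hii Ht
                  ltac:(lra) ltac:(lra)).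
    replace (Gf F K E' M' + w2 + (Gf F K E M - Gf F K E' M')) with (Gf F K E M + w2) in H0 by ring.
    replace (Gf F K E' M' + w1 + (Gf F K E M - Gf F K E' M')) with (Gf F K E M + w1) in H0 by ring.
    lra.
  - intros omega p1 p2 hp.
    destruct (Huniq p1 omega) as [a1 [b1 O1]]. destruct (Huniq p2 omega) as [a2 [b2 O2]].
    apply (topkis (fun t E M => QQ t omega E M) (fun t => exp t * Ldem K pL pM u t omega)
             (fun t => Mdem K pL pM u t omega) p1 p2); auto.
    intros E' E M' M h1 h12 h2 h22. unfold QQ, Q.
    assert (/ exp p2 <= / exp p1).
    { apply Rinv_le_contravar. apply exp_pos. apply exp_le; auto. }
    assert (pL * (/ exp p2) * (E - E') <= pL * (/ exp p1) * (E - E')).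
    { apply Rmult_le_compat_r; [lra|]. apply Rmult_le_compat_l; lra. }
    lra.
Qed.
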